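(* For all real $x\ge2$, $x^{-2}+x^{-2/x}<1$. *)

(* Defs.v *)
From Stdlib Require Import Reals.

(* Main.v *)
Require Import Defs.
From Stdlib Require Import Reals.
From Stdlib Require Import Lra Psatz.
Open Scope R_scope.

Theorem mainTheorem14 (x : R) (hx : 2 <= x) :
  Rpower x (-2) + Rpower x (-2 / x) < 1.
Proof.
  unfold Rpower.
  assert (Hx0 : 0 < x) by lra.
  set (L := ln x).
  assert (HL : / 2 < L).
  { pose proof ln_lt_2. assert (ln 2 <= ln x).
    { destruct (Req_dec x 2) as [->|Hne]; [lra|]. left; apply ln_increasing; lra. }
    unfold L; lra. }
  set (u := 2 / x * L).
  assert (Hu : 0 < u) by (unfold u; apply Rmult_lt_0_compat; [apply Rdiv_lt_0_compat|]; lra).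
  assert (HA : exp (-2 * L) * (x * x) = 1).
  { replace (x * x) with (exp (2 * L)).
    - rewrite <- exp_plus. replace (-2 * L + 2 * L) with 0 by ring. apply exp_0.
    - replace (2 * L) with (L + L) by ring. rewrite exp_plus. unfold L. rewrite exp_ln; auto. }
  assert (HB : exp (-2 / x * L) * exp u = 1).
  { rewrite <- exp_plus. replace (-2 / x * L + u) with 0 by (unfold u; field; lra). apply exp_0. }
  pose proof (exp_ineq1 u ltac:(lra)) as Hi.
  assert (Hpos : 0 < exp (-2 / x * L)) by apply exp_pos.
  assert (Hpos2 : 0 < exp (-2 * L)) by apply exp_pos.
  assert (HB' : exp (-2 / x * L) * (1 + u) < 1) by nra.
  assert (Hux : u * x = 2 * L) by (unfold u; field; lra).
  (* need A + B < 1 with A = 1/x^2, B < 1/(1+u) *)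
  set (A := exp (-2 * L)) in *. set (B := exp (-2 / x * L)) in *.
  assert (H1 : 1 + u < x * x * u).
  {
    assert (x + 2 * L < x * (2 * L) * x) by (assert (0 <= (L - /2) * (x*x-1)) by (apply Rmult_le_pos; nra); nra). nra. }
  assert (Hsum : (A + B) * (x * x * (1 + u)) < x * x * (1 + u)).
  { assert (A * (x * x * (1 + u)) = 1 + u) by (replace (A * (x * x * (1 + u))) with (A * (x * x) * (1 + u)) by ring; rewrite HA; ring).
    assert (B * (x * x * (1 + u)) < x * x) by nra. nra. }
  nra.
Qed.
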